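(* For the additive noise model with $N$ items and $K$ defectives and the random Bernoulli$(1/K)$ design, in the regime $N,K\to\infty$ with $K=o(N)$, a necessary condition on the number of tests is $$T=\Omega\!\left(\frac{K\log\frac{N}{K}}{2(1-q)+\ln\frac{1}{q}}\right),$$ where $q$ is the parameter of the Bernoulli noise; namely, if $T=o\!\left(\frac{K\log\frac{N}{K}}{2(1-q)+\ln\frac1q}\right)$ then the error probability approaches $1$.
   Context: Design: $N\times T$ binary matrix with i.i.d. Bernoulli$(1/K)$ entries, $X_j(t)=1$ iff item $j$ is in test $t$. Additive noise model: for defective set $S$ ($|S|=K$, uniformly distributed among $K$-subsets), $Y(t)=\left(\bigvee_{j\in S}X_j(t)\right)\vee W(t)$ with $W(t)$ i.i.d. Bernoulli$(q)$, $q\in(0,1)$, independent of the design. The error probability is that of any decoder estimating $S$ from the outcomes $Y^T$ and the design. *)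

(* Defs.v *)
From HB Require Import structures.
From mathcomp Require Import all_boot all_order all_algebra.
From mathcomp Require Import all_classical all_reals all_analysis.
Set Implicit Arguments. Unset Strict Implicit. Unset Printing Implicit Defensive.
Import Order.TTheory GRing.Theory Num.Theory.
Local Open Scope ring_scope.

(* A test design: X (j, t) = true iff item j is in test t. *)
Definition design (N T : nat) := {ffun 'I_N * 'I_T -> bool}.
Definition noise (T : nat) := {ffun 'I_T -> bool}.

Definition outcome (N T : nat) (X : design N T) (S : {set 'I_N}) (W : noise T)
  : {ffun 'I_T -> bool} :=
  [ffun t => [exists j in S, X (j, t)] || W t].

Definition decoder (N T : nat) := design N T -> {ffun 'I_T -> bool} -> {set 'I_N}.

Definition bern {R : realType} (p : R) (b : bool) : R := if b then p else 1 - p.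

Definition design_prob {R : realType} (N K T : nat) (X : design N T) : R :=
  \prod_(jt : 'I_N * 'I_T) bern ((K%:R : R)^-1) (X jt).

Definition noise_prob {R : realType} (T : nat) (q : R) (W : noise T) : R :=
  \prod_(t : 'I_T) bern q (W t).

Definition ksets (N K : nat) : {set {set 'I_N}} := [set S : {set 'I_N} | #|S| == K].

Definition error_prob {R : realType} (N K T : nat) (q : R) (dec : decoder N T) : R :=
  \sum_(S in ksets N K) \sum_(X : design N T) \sum_(W : noise T)
     ((#|ksets N K|%:R : R)^-1 * design_prob K X * noise_prob q W
       * ((dec X (outcome X S W) != S)%:R)).

(* Main.v *)
Require Import Defs.
From HB Require Import structures.
From mathcomp Require Import all_boot all_order all_algebra.
From mathcomp Require Import all_classical all_reals all_analysis.
From mathcomp Require Import ring lra.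
Import Order.TTheory GRing.Theory Num.Theory.
Import numFieldNormedType.Exports.
Local Open Scope ring_scope.

Lemma sum_bern (R : realType) (p : R) : \sum_(b : bool) bern p b = 1.
Proof. by rewrite big_bool /= addrC subrK. Qed.

Lemma bern_ge0 (R : realType) (p : R) b : 0 <= p <= 1 -> 0 <= bern p b.
Proof. by case/andP=> h0 h1; case: b => //=; rewrite subr_ge0. Qed.

Lemma sum_prod_bern (R : realType) (I : finType) (p : R) :
  \sum_(f : {ffun I -> bool}) \prod_(i : I) bern p (f i) = 1.
Proof.
rewrite -(bigA_distr_bigA (fun (i : I) (b : bool) => bern p b)) /=.
by rewrite big1 // => i _; rewrite sum_bern.
Qed.

Lemma invK_01 (R : realType) (K : nat) : 0 <= (K%:R : R)^-1 <= 1.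
Proof.
case: K => [|k]; first by rewrite invr0 lexx ler01.
by rewrite invr_ge0 ler0n /= invf_le1 ?ltr0Sn // ler1n.
Qed.

Lemma nat_binom_bound (N K : nat) : (K <= N)%N -> (N ^ K <= 'C(N, K) * K ^ K)%N.
Proof.
move=> hKN.
have H : forall m, (N ^ m * K ^_ m <= N ^_ m * K ^ m)%N.
  elim=> [|m IH]; first by rewrite !expn0 !ffactn0.
  rewrite expnS ffactnSr ffactnSr expnS.
  have h2 : (N * (K - m) <= (N - m) * K)%N.
    rewrite mulnBr mulnBl; apply: leq_sub2l; rewrite mulnC; exact: leq_mul.
  have E1 : (N * N ^ m * (K ^_ m * (K - m)) = N ^ m * K ^_ m * (N * (K - m)))%N by ring.
  have E2 : (N ^_ m * (N - m) * (K * K ^ m) = N ^_ m * K ^ m * ((N - m) * K))%N by ring.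
  by rewrite E1 E2; exact: leq_mul IH h2.
have := H K; rewrite ffactnn -bin_ffact.
rewrite [('C(N, K) * K`! * K ^ K)%N]mulnC mulnA [(K ^ K * 'C(N, K))%N]mulnC.
by rewrite leq_pmul2r // fact_gt0.
Qed.

Lemma count_bound (N T : nat) (X : design N T) (dec : decoder N T) (W : noise T)
  (A : {pred {set 'I_N}}) :
  (\sum_(S in A) ((dec X (outcome X S W) == S) : nat) <= 2 ^ T)%N.
Proof.
rewrite (eq_bigr (fun S => if dec X (outcome X S W) == S then 1 else 0)%N);
  last by move=> S _; case: eqP.
rewrite -big_mkcondr sum1_card.
apply: (@leq_trans #|[set dec X Y | Y in [set: {ffun 'I_T -> bool}]]|).
  apply: subset_leq_card; apply/fintype.subsetP => S /andP[_ /eqP <-].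
  by apply: imset_f; rewrite inE.
apply: leq_trans (leq_imset_card _ _) _.
by rewrite cardsT card_ffun card_bool card_ord.
Qed.

Lemma err_bounds (R : realType) (N K T : nat) (q : R) (dec : decoder N T) :
  0 <= q <= 1 -> (0 < #|ksets N K|)%N ->
  1 - 2%:R ^+ T / (#|ksets N K|%:R) <= error_prob K q dec <= 1.
Proof.
move=> q01 hk.
set c : R := (#|ksets N K|%:R)^-1.
have c0 : 0 <= c by rewrite invr_ge0 ler0n.
have pX0 : forall X : design N T, 0 <= design_prob K X :> R.
  by move=> X; apply: prodr_ge0 => i _; apply: bern_ge0; exact: invK_01.
have pW0 : forall W : noise T, 0 <= noise_prob q W.
  by move=> W; apply: prodr_ge0 => i _; apply: bern_ge0.
have sX : \sum_(X : design N T) design_prob K X = 1 :> R by exact: sum_prod_bern.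
have sW : \sum_(W : noise T) noise_prob q W = 1 by exact: sum_prod_bern.
set succ := \sum_(S in ksets N K) \sum_(X : design N T) \sum_(W : noise T)
     (c * design_prob K X * noise_prob q W * ((dec X (outcome X S W) == S)%:R)).
have Hs : error_prob K q dec = 1 - succ.
  have tot : \sum_(S in ksets N K) \sum_(X : design N T) \sum_(W : noise T)
     (c * design_prob K X * noise_prob q W) = 1.
    under eq_bigr => S _.
      under eq_bigr => X _ do rewrite -mulr_sumr sW mulr1.
      over.
    rewrite /= -mulr_sumr sX mulr1 sumr_const -mulr_natr mulVf //.
    by rewrite pnatr_eq0 -lt0n.
  rewrite -[X in _ = X - _]tot /error_prob /succ -/c.
  rewrite -sumrB; apply: eq_bigr => S _; rewrite -sumrB; apply: eq_bigr => X _.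
  rewrite -sumrB; apply: eq_bigr => W _.
  by case: eqP => _ /=; rewrite ?mulr1 ?mulr0 ?subr0 ?subrr.
have s0 : 0 <= succ.
  apply: sumr_ge0 => S _; apply: sumr_ge0 => X _; apply: sumr_ge0 => W _.
  by rewrite !mulr_ge0.
have s1 : succ <= c * 2%:R ^+ T.
  rewrite /succ exchange_big /=.
  under eq_bigr => X _ do rewrite exchange_big /=.
  apply: (@le_trans _ _ (\sum_(X : design N T) \sum_(W : noise T)
        c * design_prob K X * noise_prob q W * 2%:R ^+ T)).
    apply: ler_sum => X _; apply: ler_sum => W _.
    rewrite -mulr_sumr; apply: ler_wpM2l; first by rewrite !mulr_ge0.
    rewrite -natr_sum -natrX ler_nat; exact: count_bound.
  under eq_bigr => X _ do rewrite -mulr_suml -mulr_sumr sW mulr1.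
  by rewrite -mulr_suml -mulr_sumr sX mulr1.
rewrite Hs; apply/andP; split.
  by rewrite lerB // mulrC.
by rewrite lerBlDr lerDl.
Qed.

Lemma key (R : realType) (q e : R) (N K T : nat) (dec : decoder N T) :
  0 < q < 1 -> 0 < e -> 2 / e <= K%:R -> 1 <= (K%:R : R) -> 1 <= (N%:R : R) ->
  (K%:R / N%:R : R) <= expR (-1) ->
  (T%:R / (K%:R * ln (N%:R / K%:R) / (2 * (1 - q) + ln q^-1)) : R)
     <= (2 * (1 - q) + ln q^-1) / (2 * ln 2) ->
  `|1 - error_prob K q dec| <= e.
Proof.
move=> /andP[q0 q1] e0 hke hk1 hn1 hkn hT.
set k : R := K%:R in hke hk1 hkn hT *.
set nn : R := N%:R in hn1 hkn hT.
set t : R := T%:R in hT.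
set c := 2 * (1 - q) + ln q^-1 in hT.
have k0 : 0 < k := lt_le_trans (@ltr01 R) hk1.
have n0 : 0 < nn := lt_le_trans (@ltr01 R) hn1.
have c0 : 0 < c.
  have : 0 < ln q^-1 by apply: ln_gt0; rewrite invf_gt1.
  rewrite /c; lra.
set b := nn / k.
have b0 : 0 < b by rewrite divr_gt0.
have be : expR 1 <= b.
  rewrite /b ler_pdivlMr //.
  move: hkn; rewrite ler_pdivrMr // => hkn.
  have h1 : expR 1 * expR (-1) = 1 :> R by rewrite -expRD subrr expR0.
  have := ler_wpM2l (ltW (expR_gt0 1)) hkn.
  by rewrite mulrA h1 mul1r mulrC.
have lb : 1 <= ln b.
  rewrite -(expRK (1:R)) ler_ln // posrE ?expR_gt0 //.
have hKN : (K <= N)%N.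
  rewrite -(ler_nat R) -/k -/nn.
  have : 1 <= b by apply: le_trans be; rewrite -expR0 ler_expR.
  by rewrite /b ler_pdivlMr // mul1r.
set C := #|ksets N K|.
have hC : C = 'C(N, K) by rewrite /C /ksets card_draws card_ord.
have C0 : (0 < C)%N by rewrite hC bin_gt0.
have CR0 : 0 < C%:R :> R by rewrite ltr0n.
have bC : b ^+ K <= C%:R.
  rewrite /b expr_div_n ler_pdivrMr ?exprn_gt0 // /nn /k -!natrX -natrM ler_nat hC.
  exact: nat_binom_bound.
set L := k * ln b.
have kL : k <= L by rewrite /L -{1}[k]mulr1 ler_wpM2l // ltW.
have L0 : 0 < L := lt_le_trans k0 kL.
have tL : t * ln 2 <= L / 2.
  have l20 : 0 < ln 2 :> R by apply: ln_gt0; rewrite ltr1n.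
  move: hT; rewrite -/b -/L ler_pdivrMr ?divr_gt0 // => hT.
  have -> : L / 2 = c / (2 * ln 2) * (L / c) * ln 2.
    field; apply/andP; split; apply/lt0r_neq0 => //.
  by rewrite ler_wpM2r // ltW.
have E2 : (2%:R ^+ T : R) = expR (t * ln 2).
  by rewrite -[LHS]lnK ?posrE ?exprn_gt0 ?ltr0n // lnXn ?ltr0n // /t mulr_natl.
have Eb : b ^+ K = expR (k * ln b).
  by rewrite -[LHS]lnK ?posrE ?exprn_gt0 // lnXn // /k mulr_natl.
have main : 2%:R ^+ T * (k / 2) <= b ^+ K.
  rewrite E2 Eb.
  apply: (@le_trans _ _ (expR (t * ln 2) * expR (k / 2))).
    apply: ler_wpM2l; first exact: ltW (expR_gt0 _).
    apply: le_trans (expR_ge1Dx _); lra.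
  rewrite -expRD ler_expR -/L.
  have : k / 2 <= L / 2 by rewrite ler_pM2r.
  lra.
have bound : 2%:R ^+ T / C%:R <= e.
  rewrite ler_pdivrMr //.
  have h2k : 2 / k <= e by rewrite ler_pdivrMr // mulrC -ler_pdivrMr.
  have : 2%:R ^+ T * (k / 2) <= C%:R by apply: le_trans main bC.
  move=> h.
  have Tpos : 0 < 2%:R ^+ T :> R by rewrite exprn_gt0 ?ltr0n.
  apply: (@le_trans _ _ ((2 / k) * C%:R)); last by rewrite ler_wpM2r // ltW.
  have : 2 / k * (2%:R ^+ T * (k / 2)) <= 2 / k * C%:R.
    by rewrite ler_wpM2l // ltW // divr_gt0.
  have -> : 2 / k * (2%:R ^+ T * (k / 2)) = 2%:R ^+ T.
    by field; apply/lt0r_neq0.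
  by [].
have := @err_bounds R N K T q dec.
rewrite ltW // ltW // -/C => /(_ isT C0) /andP[h1 h2].
rewrite ger0_norm ?subr_ge0 //.
move: h1; rewrite lerBlDr => h1.
apply: le_trans bound; rewrite lerBlDr addrC; exact: h1.
Qed.

Local Open Scope classical_set_scope.
Local Open Scope ring_scope.

Theorem theorem8 (R : realType) (q : R) (hq0 : 0 < q) (hq1 : q < 1)
  (N K T : nat -> nat)
  (hN : (fun n => (N n)%:R : R) @ \oo --> +oo)
  (hK : (fun n => (K n)%:R : R) @ \oo --> +oo)
  (hKN : (fun n => (K n)%:R / (N n)%:R : R) @ \oo --> 0)
  (hT : (fun n => (T n)%:R /
          ((K n)%:R * ln ((N n)%:R / (K n)%:R) / (2 * (1 - q) + ln q^-1)) : R)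
          @ \oo --> 0)
  (dec : forall n, decoder (N n) (T n)) :
  (fun n => error_prob (K n) q (dec n)) @ \oo --> (1 : R).
Proof.
apply/cvgrPdist_le => e e0.
set c := 2 * (1 - q) + ln q^-1.
have c0 : 0 < c.
  have : 0 < ln q^-1 by apply: ln_gt0; rewrite invf_gt1.
  rewrite /c; lra.
have l20 : 0 < ln 2 :> R by apply: ln_gt0; rewrite ltr1n.
have eps0 : 0 < c / (2 * ln 2) by rewrite divr_gt0 // mulr_gt0.
have F1 : \forall n \near \oo, 2 / e <= ((K n)%:R : R) by move/cvgryPge: hK; apply.
have F1' : \forall n \near \oo, 1 <= ((K n)%:R : R) by move/cvgryPge: hK; apply.
have F2 : \forall n \near \oo, 1 <= ((N n)%:R : R) by move/cvgryPge: hN; apply.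
have F3 := cvgr_dist_le _ _ hKN _ (expR_gt0 (-1)).
have F4 := cvgr_dist_le _ _ hT _ eps0.
near=> n.
have h1 : 2 / e <= (K n)%:R by near: n.
have h1' : 1 <= ((K n)%:R : R) by near: n.
have h2 : 1 <= ((N n)%:R : R) by near: n.
have h3 : `|0 - (K n)%:R / (N n)%:R| <= expR (-1) :> R by near: n; apply: F3.
have h4 : `|0 - (T n)%:R /
          ((K n)%:R * ln ((N n)%:R / (K n)%:R) / c)| <= c / (2 * ln 2) :> R by near: n; apply: F4.
rewrite sub0r normrN in h3; rewrite sub0r normrN in h4.
apply: key => //.
- by rewrite hq0 hq1.
- exact: le_trans (ler_norm _) h3.
- exact: le_trans (ler_norm _) h4.
Unshelve. all: by end_near.
Qed.
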